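(* For any $\alpha<1/2$ there exist constants $0<c\le C<\infty$ such that for all $n\ge1$, \[c\,n^{-1/2}\le \mathbb{P}\big(Z_i\ge i^\alpha\ \forall i=1,\ldots,n\big)\le C\,n^{-1/2}.\]
   Context: $X_1,X_2,\ldots$ are i.i.d. with $\mathbb{P}(X_i=1)=\mathbb{P}(X_i=-1)=1/2$ and $Z_i=\sum_{k=1}^i\prod_{j=1}^kX_j$. *)

(* Defs.v *)
From HB Require Import structures.
From mathcomp Require Import all_boot all_order all_algebra.
From mathcomp Require Import all_classical all_reals all_analysis.
Set Implicit Arguments. Unset Strict Implicit. Unset Printing Implicit Defensive.
Import Order.TTheory GRing.Theory Num.Theory.
Local Open Scope ring_scope.

(* A realisation of the first n signs: x is an n-tuple of booleans,
   X_k = 1 if the (k-1)-th entry is true, -1 otherwise (k = 1..n). *)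
Definition Xsign (R : realType) (n : nat) (x : n.-tuple bool) (k : nat) : R :=
  if nth false x k.-1 then 1 else -1.

Definition Zsum (R : realType) (n : nat) (x : n.-tuple bool) (i : nat) : R :=
  \sum_(1 <= k < i.+1) \prod_(1 <= j < k.+1) Xsign R x j.

Definition good_event (R : realType) (alpha : R) (n : nat) (x : n.-tuple bool) : bool :=
  [forall i : 'I_n, ((i.+1)%:R `^ alpha <= Zsum R x i.+1)].

Definition prob_good (R : realType) (alpha : R) (n : nat) : R :=
  #|[set x : n.-tuple bool | good_event alpha x]|%:R / 2 ^+ n.

(* Main.v *)
Require Import Defs.
From HB Require Import structures.
From mathcomp Require Import all_boot all_order all_algebra.
From mathcomp Require Import all_classical all_reals all_analysis.
From mathcomp Require Import zify ring lra.
Set Implicit Arguments. Unset Strict Implicit. Unset Printing Implicit Defensive.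

Lemma bin_mid_incr k j : 2 * j < k -> 'C(k, j) <= 'C(k, j.+1).
Proof.
move=> h.
have e := mul_bin_left k j.
have hk : j.+1 <= k - j by lia.
have : j.+1 * 'C(k, j) <= j.+1 * 'C(k, j.+1).
  rewrite e; exact: leq_mul.
by rewrite leq_pmul2l.
Qed.

Lemma bin_le_half k j : 'C(k, j) <= 'C(k, k./2).
Proof.
wlog hj : j / 2 * j <= k.
  move=> W; case: (leqP (2 * j) k) => h; first exact: W.
  case: (leqP j k) => hjk; last by rewrite bin_small.
  rewrite -bin_sub //; apply: W; lia.
have hh : k./2.*2 <= k <= k./2.*2 + 1.
  by rewrite -{2 4}(odd_double_half k); case: (odd k) => /=; lia.
move/andP: hh => [hh1 hh2].
have : forall d, 2 * (k./2 - d) <= k -> 'C(k, k./2 - d) <= 'C(k, k./2).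
  elim=> [|d IH] h; first by rewrite subn0.
  case: (ltnP d k./2) => hd.
  - have h2 : 2 * (k./2 - d) <= k by lia.
    apply: leq_trans (IH h2).
    have -> : k./2 - d = (k./2 - d.+1).+1 by lia.
    apply: bin_mid_incr; lia.
  - have -> : k./2 - d.+1 = k./2 - d by lia.
    apply: IH; lia.
move/(_ (k./2 - j)); have -> : k./2 - (k./2 - j) = j by lia.
apply; lia.
Qed.

Lemma central_rec m : 'C(m.+1.*2, m.+1) * m.+1 = 2 * (m.*2.+1) * 'C(m.*2, m).
Proof.
have e1 := mul_bin_diag (m.*2.+2) m.
have e2 := mul_bin_diag (m.*2.+1) m.
have e3 : 'C(m.*2.+1, m.+1) = 'C(m.*2.+1, m).
  rewrite -bin_sub; last lia. congr binomial; lia.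
rewrite /= e3 in e2. simpl in e1.
have -> : m.+1.*2 = m.*2.+2 by lia.
set a := 'C(m.*2, m) in e2 *; set c := 'C(m.*2.+1, m) in e1 e2 *.
set b := 'C(m.*2.+2, m.+1) in e1 *.
have hb : b = 2 * c.
  apply/eqP; rewrite -(eqn_pmul2l (ltn0Sn m)) -e1; apply/eqP; lia.
rewrite hb. lia.
Qed.

Lemma central_bound m : 'C(m.*2, m) ^ 2 * m.+1 <= 16 ^ m.
Proof.
elim: m => [|m IH]; first by [].
have e := central_rec m.
set a := 'C(m.*2, m) in e IH *; set b := 'C(m.+1.*2, m.+1) in e *.
have key : b ^ 2 * m.+2 * (m.+1 ^ 2) <= 16 ^ m.+1 * (m.+1 ^ 2).
  have -> : b ^ 2 * m.+2 * (m.+1 ^ 2) = (b * m.+1) ^ 2 * m.+2 by ring.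
  rewrite e (expnS 16 m).
  have h1 : (2 * m.*2.+1 * a) ^ 2 * m.+2 <= 16 * (a ^ 2 * m.+1) * m.+1 ^ 2.
    have -> : (2 * m.*2.+1 * a) ^ 2 * m.+2 = a ^ 2 * (4 * (m.*2.+1)^2 * m.+2) by ring.
    have -> : 16 * (a ^ 2 * m.+1) * m.+1 ^ 2 = a ^ 2 * (16 * m.+1 ^ 3) by ring.
    apply: leq_mul => //. 
    have -> : m.*2 = 2 * m by lia.
    nia.
  apply: (leq_trans h1). by rewrite leq_mul2r leq_mul2l IH !orbT.
by rewrite leq_pmul2r ?expn_gt0 in key.
Qed.

Lemma bin_sq k j : 'C(k, j) ^ 2 * k.+1 <= 2 * 4 ^ k.
Proof.
apply: (leq_trans (n := 'C(k, k./2) ^ 2 * k.+1)).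
  by rewrite leq_mul2r leq_exp2r ?bin_le_half ?orbT.
have [m hm] : exists m, k = m.*2 \/ k = m.*2.+1.
  exists k./2; case: (odd k) (odd_double_half k) => /= <-; [right|left]; lia.
case: hm => ->.
- have -> : (m.*2)./2 = m by rewrite doubleK.
  have h := central_bound m.
  have -> : 4 ^ m.*2 = 16 ^ m by rewrite -mul2n expnM.
  apply: (leq_trans (n := 2 * ('C(m.*2, m) ^ 2 * m.+1))); last by rewrite leq_mul2l h.
  nia.
- have -> : (m.*2.+1)./2 = m by rewrite /= uphalf_double.
  have h := central_bound m.
  have e2 := mul_bin_diag (m.*2.+1) m.
  have e3 : 'C(m.*2.+1, m.+1) = 'C(m.*2.+1, m).
    rewrite -bin_sub; last lia. congr binomial; lia.
  rewrite e3 /= in e2.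
  have hc : 'C(m.*2.+1, m) <= 2 * 'C(m.*2, m).
    have : m.+1 * 'C(m.*2.+1, m) <= m.+1 * (2 * 'C(m.*2, m)).
      rewrite -e2; nia.
    by rewrite leq_pmul2l.
  have -> : 4 ^ m.*2.+1 = 4 * 16 ^ m by rewrite expnS -mul2n expnM.
  apply: (leq_trans (n := 8 * ('C(m.*2, m) ^ 2 * m.+1))); last by nia.
  have : 'C(m.*2.+1, m) ^ 2 <= 4 * 'C(m.*2, m) ^ 2.
    have -> : 4 * 'C(m.*2, m) ^ 2 = (2 * 'C(m.*2, m)) ^ 2 by ring.
    by rewrite leq_exp2r.
  nia.
Qed.

Definition wv k x j : nat := ((2 * j < k + x) && (k <= x + 2 * j)).
Definition sv (k x : nat) : nat := \sum_(j < k.+1) 'C(k, j) * wv k x j.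

Lemma sv_ext k x : sv k x = \sum_(j < k.+2) 'C(k, j) * wv k x j.
Proof. by rewrite big_ord_recr /= bin_small // mul0n addn0. Qed.

Lemma sv_k0 k : sv k 0 = 0.
Proof. by apply: big1 => j _; rewrite /wv; case: leqP; case: ltnP => //= *; lia. Qed.

Lemma sv_0x x : sv 0 x = (0 < x).
Proof. by rewrite /sv big_ord_recl big_ord0 /wv /=; case: x. Qed.

Lemma wv_id k x j : 0 < x ->
  wv k.+1 x j + wv k.+1 x j.+1 = wv k x.-1 j + wv k x.+1 j.
Proof.
move=> hx; rewrite /wv.
case: (ltnP (2 * j) (k.+1 + x)); case: (leqP k.+1 (x + 2 * j));
case: (ltnP (2 * j.+1) (k.+1 + x)); case: (leqP k.+1 (x + 2 * j.+1));
case: (ltnP (2 * j) (k + x.-1)); case: (leqP k (x.-1 + 2 * j));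
case: (ltnP (2 * j) (k + x.+1)); case: (leqP k (x.+1 + 2 * j)) => //=; lia.
Qed.

Lemma svS k x : 0 < x -> sv k.+1 x = sv k x.-1 + sv k x.+1.
Proof.
move=> hx.
rewrite [LHS]/sv big_ord_recl.
under eq_bigr => j _ do rewrite lift0 binS mulnDl.
rewrite big_split /= addnA.
have -> : 'C(k.+1, 0) * wv k.+1 x 0 + (\sum_(i < k.+1) 'C(k, i.+1) * wv k.+1 x i.+1)
   = \sum_(j < k.+2) 'C(k, j) * wv k.+1 x j.
  by rewrite [RHS]big_ord_recl !bin0; congr (_ + _); apply: eq_bigr => i _; rewrite lift0.
have -> : \sum_(i < k.+1) 'C(k, i) * wv k.+1 x i.+1 = \sum_(j < k.+2) 'C(k, j) * wv k.+1 x j.+1.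
  by rewrite [RHS]big_ord_recr /= bin_small // mul0n addn0.
rewrite -big_split /= !sv_ext -big_split /=.
by apply: eq_bigr => j _; rewrite -!mulnDr wv_id.
Qed.

Lemma sum_pick (F : nat -> nat) n t : \sum_(j < n) F j * ((j : nat) == t) = (t < n) * F t.
Proof.
elim: n => [|n IH]; first by rewrite big_ord0.
rewrite big_ord_recr /= IH.
case: eqP => [<-|e]; case: (ltnP n n) => h0; case: (ltnP n n.+1) => h1;
  case: (ltnP t n) => h2; case: (ltnP t n.+1) => h3 /=; lia.
Qed.

Lemma sv_bound k x : sv k x <= 2 * x * 'C(k, k./2).
Proof.
elim: x => [|x IH]; first by rewrite sv_k0.
set M := 'C(k, k./2).
have hp : forall c, \sum_(j < k.+1) 'C(k, j) * (2 * j == c) <= M.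
  move=> c.
  apply: (leq_trans (n := \sum_(j < k.+1) 'C(k, j) * ((j : nat) == c./2))).
    apply: leq_sum => j _; rewrite leq_mul2l; apply/orP; right.
    case: eqP => //= <-; rewrite mul2n doubleK eqxx //.
  rewrite (sum_pick (fun j => 'C(k, j))).
  case: (_ < _) => /=; rewrite ?mul1n ?mul0n //; exact: bin_le_half.
have step : sv k x.+1 <= sv k x + (\sum_(j < k.+1) 'C(k, j) * (2 * j == k + x))
     + (\sum_(j < k.+1) 'C(k, j) * (2 * j == k - x.+1)).
  rewrite /sv -!big_split /=; apply: leq_sum => j _.
  rewrite -!mulnDr leq_mul2l; apply/orP; right.
  rewrite /wv.
  case: (ltnP (2 * j) (k + x.+1)); case: (leqP k (x.+1 + 2 * j));
  case: (ltnP (2 * j) (k + x)); case: (leqP k (x + 2 * j));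
  case: (eqVneq (2 * j) (k + x)); case: (eqVneq (2 * j) (k - x.+1)) => //=; lia.
apply: (leq_trans step).
have := hp (k + x); have := hp (k - x.+1). lia.
Qed.

Import Order.TTheory GRing.Theory Num.Theory.
Local Open Scope ring_scope.

Section DP.
Variable R : realType.
Implicit Types (ok : nat -> nat -> bool) (mu nu : nat -> R) (phi : nat -> R).

Definition stepm ok (i : nat) mu : nat -> R :=
  fun x => if ok i.+1 x then ((if x is y.+1 then mu y else 0) + mu x.+1) / 2 else 0.

Fixpoint fwd ok (i0 : nat) mu (k : nat) : nat -> R :=
  if k is k'.+1 then stepm ok (i0 + k') (fwd ok i0 mu k') else mu.

Definition Tf ok (i : nat) phi (x : nat) : R :=
  ((if ok i.+1 x.+1 then phi x.+1 else 0) +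
   (if x is y.+1 then (if ok i.+1 y then phi y else 0) else 0)) / 2.

Lemma adjoint ok i nu phi (N : nat) : (forall x, (N <= x)%N -> nu x = 0) ->
  \sum_(y < N.+1) stepm ok i nu y * phi y = \sum_(x < N.+1) nu x * Tf ok i phi x.
Proof.
move=> hs.
pose fA (y : nat) := (if ok i.+1 y then (if y is z.+1 then nu z else 0) * phi y else 0) / 2.
pose fB (y : nat) := (if ok i.+1 y then nu y.+1 * phi y else 0) / 2.
pose gA (x : nat) := nu x * (if ok i.+1 x.+1 then phi x.+1 else 0) / 2.
pose gB (x : nat) := nu x * (if x is y.+1 then (if ok i.+1 y then phi y else 0) else 0) / 2.
have eL : forall y : 'I_N.+1, stepm ok i nu y * phi y = fA y + fB y.
  move=> y; rewrite /stepm /fA /fB; case: (ok _ _); last by rewrite !mul0r addr0.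
  by case: (nat_of_ord y) => [|z]; ring.
have eR : forall x : 'I_N.+1, nu x * Tf ok i phi x = gA x + gB x.
  move=> x; rewrite /Tf /gA /gB. by case: (nat_of_ord x) => [|z]; ring.
rewrite (eq_bigr _ (fun y _ => eL y)) (eq_bigr _ (fun x _ => eR x)) !big_split /=.
congr (_ + _).
- rewrite big_ord_recl big_ord_recr /=.
  have -> : fA 0 = 0 by rewrite /fA /= mul0r if_same mul0r.
  have -> : gA N = 0 by rewrite /gA (hs N) // !mul0r.
  rewrite add0r addr0; apply: eq_bigr => x _.
  have -> : bump 0 x = x.+1 by [].
  rewrite /fA /gA /=; case: ifP => _; rewrite ?mul0r ?mulr0 //; ring.
- rewrite [LHS]big_ord_recr [RHS]big_ord_recl /=.
  have -> : gB 0 = 0 by rewrite /gB /= mulr0 mul0r.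
  have -> : fB N = 0 by rewrite /fB (hs N.+1) // mul0r if_same mul0r.
  rewrite add0r addr0; apply: eq_bigr => x _.
  have -> : bump 0 x = x.+1 by [].
  rewrite /fB /gB /=; case: ifP => _; rewrite ?mul0r ?mulr0 //; ring.
Qed.

Lemma fwd_add ok i0 mu a b : fwd ok i0 mu (a + b) = fwd ok (i0 + a) (fwd ok i0 mu a) b.
Proof. by elim: b => [|b IH]; rewrite ?addn0 //= addnS /= IH addnA. Qed.

Lemma fwd_mono ok ok' i0 mu mu' : (forall i x, ok i.+1 x -> ok' i.+1 x) ->
  (forall x, 0 <= mu x) -> (forall x, mu x <= mu' x) ->
  forall k x, 0 <= fwd ok i0 mu k x /\ fwd ok i0 mu k x <= fwd ok' i0 mu' k x.
Proof.
move=> hok h0 h1; elim=> [|k IH] x /=; first by split; [apply: h0| apply: h1].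
rewrite /stepm.
have [b1 b2] := IH x.+1.
case: x => [|y] in b1 b2 *.
- case: ifP => o; [rewrite (hok _ _ o); split; lra | case: ifP => _; split => //; lra].
- have [a1 a2] := IH y.
  case: ifP => o; [rewrite (hok _ _ o); split; lra | case: ifP => _; split => //; lra].
Qed.

Lemma fwd_ge0 ok i0 mu : (forall x, 0 <= mu x) -> forall k x, 0 <= fwd ok i0 mu k x.
Proof.
move=> h k x; have [] := @fwd_mono ok ok i0 mu mu (fun _ _ o => o) h (fun x => lexx _) k x.
done.
Qed.

Lemma fwd_scale ok i0 mu (c : R) : forall k x,
  fwd ok i0 (fun y => c * mu y) k x = c * fwd ok i0 mu k x.
Proof.
elim=> [|k IH] x //=; rewrite /stepm; case: ifP => _; last by rewrite mulr0.
rewrite IH; case: x => [|y]; rewrite ?IH; ring.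
Qed.

Lemma fwd_supp ok i0 mu (S : nat) : (forall x, (S <= x)%N -> mu x = 0) ->
  forall k x, (S + k <= x)%N -> fwd ok i0 mu k x = 0.
Proof.
move=> h; elim=> [|k IH] x /=; first by rewrite addn0; apply: h.
move=> hx; rewrite /stepm; case: ifP => _ //.
rewrite IH ?addr0; last lia.
by case: x hx => [|y] hy; rewrite ?mul0r // IH ?mul0r //; lia.
Qed.

End DP.

Definition rcT n (p : n.-tuple bool * bool) : n.+1.-tuple bool := [tuple of rcons p.1 p.2].
Definition unrc n (t : n.+1.-tuple bool) : n.-tuple bool * bool :=
  ([tuple of belast (thead t) (behead t)], last (thead t) (behead t)).

Lemma rcT_bij n : bijective (@rcT n).
Proof.
exists (@unrc n).
- case=> s b; rewrite /unrc /rcT /=.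
  have e : thead [tuple of rcons s b] :: behead [tuple of rcons s b] = rcons s b.
    by rewrite -[RHS]/(val [tuple of rcons s b]) [in RHS](tuple_eta [tuple of rcons s b]).
  have := lastI (thead [tuple of rcons s b]) (behead [tuple of rcons s b]).
  rewrite e => /rcons_inj [e1 e2].
  congr pair; last by rewrite -e2.
  by apply: val_inj; rewrite /= -e1.
- move=> t; rewrite /unrc /rcT; apply: val_inj => /=.
  by rewrite -lastI [in RHS](tuple_eta t).
Qed.

Lemma sum_rcons (R : nmodType) n (F : n.+1.-tuple bool -> R) :
  \sum_(t : n.+1.-tuple bool) F t = \sum_(t : n.-tuple bool) \sum_(b : bool) F (rcT (t, b)).
Proof.
rewrite (reindex (@rcT n)) /=; last by apply: onW_bij; exact: rcT_bij.
by rewrite pair_big /=; apply: eq_bigr => -[].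
Qed.

Section Walk.
Variable R : realType.
Definition Xs (s : seq bool) (k : nat) : R := if nth false s k.-1 then 1 else -1.
Definition Ys s k := \prod_(1 <= j < k.+1) Xs s j.
Definition Zs s i := \sum_(1 <= k < i.+1) Ys s k.
Definition Xb (b : bool) : R := if b then 1 else -1.

Lemma ZsumE n (t : n.-tuple bool) i : Zsum R t i = Zs t i.
Proof. by []. Qed.

Lemma Ys_rcons s b k : (k <= size s)%N -> Ys (rcons s b) k = Ys s k.
Proof.
move=> hk; apply: eq_big_nat => j /andP[h1 h2].
by rewrite /Xs nth_rcons; have -> : (j.-1 < size s)%N by lia.
Qed.

Lemma Zs_rcons s b i : (i <= size s)%N -> Zs (rcons s b) i = Zs s i.
Proof.
move=> hi; apply: eq_big_nat => k /andP[h1 h2]; apply: Ys_rcons; lia.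
Qed.

Lemma Ys_last s b : Ys (rcons s b) (size s).+1 = Ys s (size s) * Xb b.
Proof.
rewrite /Ys big_nat_recr //= -/(Ys _ _) Ys_rcons //; congr (_ * _).
by rewrite /Xs /= nth_rcons ltnn eqxx.
Qed.

Lemma Zs_last s b : Zs (rcons s b) (size s).+1 = Zs s (size s) + Ys s (size s) * Xb b.
Proof.
rewrite /Zs big_nat_recr //= -/(Zs _ _) Zs_rcons // -Ys_last //.
Qed.

Lemma Ys_pm s k : Ys s k = 1 \/ Ys s k = -1.
Proof.
elim: k => [|k IH]; first by left; rewrite /Ys big_geq.
rewrite /Ys big_nat_recr //= -/(Ys _ _) /Xs.
by case: IH => ->; case: (nth _ _ _); rewrite ?mulr1 ?mulrN1 ?opprK; auto.
Qed.

End Walk.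

Section S.
Variable R : realType.
Definition bR (b : bool) : R := b%:R.

Lemma sum_b (g : bool) (Z Y L v : R) : (Y = 1 \/ Y = -1) ->
  \sum_(b : bool) bR ((g && (L <= Z + Y * Xb R b)) && (Z + Y * Xb R b == v))
  = bR (L <= v) * (bR (g && (Z == v - 1)) + bR (g && (Z == v + 1))).
Proof.
move=> hY; rewrite big_bool /Xb /bR.
case: g; case: hY => -> /=; rewrite ?mulr1 ?mulrN1 ?mul1r;
repeat (case: eqP => ? /=); repeat (case: leP => ? /=); lra.
Qed.
End S.

Section Count.
Variables (R : realType) (alpha : R).
Definition okg (i x : nat) : bool := ((i%:R : R) `^ alpha <= x%:R).
Definition cnt n x : R := \sum_(t : n.-tuple bool) bR R (good_event alpha t && (Zsum R t n == x%:R)).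

Lemma Zs_last' (s : seq bool) b n : size s = n ->
  Zs R (rcons s b) n.+1 = Zs R s n + Ys R s n * Xb R b.
Proof. by move=> <-; apply: Zs_last. Qed.

Lemma good_rcons n (t : n.-tuple bool) b : good_event alpha (rcT (t, b)) =
  good_event alpha t && ((n.+1)%:R `^ alpha <= Zs R (rcons t b) n.+1).
Proof.
rewrite /good_event; apply/forallP/andP.
- move=> h; split; last by have := h ord_max; rewrite ZsumE.
  apply/forallP => i; have := h (widen_ord (leqnSn n) i).
  by rewrite !ZsumE /= Zs_rcons // size_tuple.
- case=> /forallP h1 h2 i; rewrite ZsumE /=.
  case: (ltnP i n) => hi.
  + by have := h1 (Ordinal hi); rewrite ZsumE /= Zs_rcons // size_tuple.
  + have -> : nat_of_ord i = n by have := ltn_ord i; lia.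
    exact: h2.
Qed.

Lemma okg0 i : okg i.+1 0 = false.
Proof. by rewrite /okg real_leNgt ?realE ?powR_ge0 ?lexx // powR_gt0 // ltr0Sn. Qed.

Lemma cnt0 x : cnt 0 x = (x == 0)%:R.
Proof.
rewrite /cnt; transitivity (\sum_(t : 0.-tuple bool) bR R ((0:R) == x%:R)); last first.
  rewrite sumr_const card_tuple card_bool expn0 mulr1n /bR.
  by rewrite eq_sym pnatr_eq0.
apply: eq_bigr => t _; congr bR.
have -> : good_event alpha t by apply/forallP => -[].
by rewrite ZsumE /Zs big_geq.
Qed.

Lemma cnt_step n x : cnt n.+1 x =
  bR R (okg n.+1 x) * ((if x is y.+1 then cnt n y else 0) + cnt n x.+1).
Proof.
rewrite /cnt sum_rcons.
under eq_bigr => t _.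
  under eq_bigr => b _ do rewrite good_rcons ZsumE /= (Zs_last' b (size_tuple t)).
  rewrite sum_b; last exact: Ys_pm.
  over.
rewrite -mulr_sumr big_split /=.
case: x => [|y].
- have h0 := okg0 n; rewrite /okg in h0; by rewrite h0 okg0 /bR /= !mulr0n !mul0r.
- congr (_ * (_ + _)).
  + by apply: eq_bigr => t _; rewrite -natr1 addrK ZsumE.
  + by apply: eq_bigr => t _; rewrite ZsumE natr1.
Qed.
End Count.

Section Link.
Variables (R : realType) (alpha : R).
Definition delta0 (y : nat) : R := (y == 0)%:R.

Lemma cnt_fwd n x : cnt alpha n x = 2 ^+ n * fwd (okg alpha) 0 delta0 n x.
Proof.
elim: n x => [|n IH] x; first by rewrite cnt0 expr0 mul1r.
rewrite cnt_step /= /stepm add0n /bR; case: (okg _ _ _); last by rewrite mulr0 mul0r.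
rewrite mul1r exprS IH; case: x => [|y]; rewrite ?IH; field.
all: done.
Qed.

Lemma good_nat n (t : n.-tuple bool) : good_event alpha t ->
  exists x, (x <= n)%N /\ Zsum R t n = x%:R.
Proof.
elim: n t => [|n IH] t.
  by move=> _; exists 0%N; split => //; rewrite ZsumE /Zs big_geq.
have [g hg1 hg2] := rcT_bij n.
rewrite -(hg2 t); case: (g t) => t' b.
rewrite good_rcons => /andP[h1 h2].
have [x [hx ex]] := IH t' h1.
have hL : 0 < (n.+1)%:R `^ alpha :> R by apply: powR_gt0; rewrite ltr0Sn.
rewrite ZsumE /= (Zs_last' R b (size_tuple t')) in h2 *.
rewrite -ZsumE ex in h2 *.
case: (Ys_pm R t' n) => -> in h2 *; case: b in h2 *; rewrite /Xb ?mul1r ?mulr1 ?mulrN1 in h2 *.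
- by exists x.+1; split; [lia | rewrite natr1].
- case: x hx ex h2 => [|x] hx ex h2; first by exfalso; rewrite add0r in h2; lra.
  by exists x; split; [lia | rewrite -natr1 addrK].
- case: x hx ex h2 => [|x] hx ex h2; first by exfalso; rewrite add0r in h2; lra.
  by exists x; split; [lia | rewrite -natr1 addrK].
- by exists x.+1; split; [lia | rewrite opprK natr1].
Qed.

Lemma prob_cnt n : prob_good alpha n = (\sum_(x < n.+1) cnt alpha n x) / 2 ^+ n.
Proof.
rewrite /prob_good; congr (_ / _).
rewrite /cnt exchange_big /= -sum1_card natr_sum big_mkcond /=.
apply: eq_bigr => t _; rewrite inE.
case: (boolP (good_event alpha t)) => hg /=.
- have [x0 [hx0 e]] := good_nat hg.
  rewrite (bigD1 (Ordinal (hx0 : (x0 < n.+1)%N))) //= e eqxx big1 /bR ?addr0 //.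
  move=> i hi; rewrite eqr_nat.
  have -> : (x0 == i :> nat) = false.
    by apply/negbTE; apply: contra hi => /eqP h; apply/eqP; apply: val_inj.
  by [].
- by rewrite big1 // => i _; rewrite /bR.
Qed.
End Link.

Section Pot.
Variable R : realType.
Implicit Types (ok : nat -> nat -> bool) (mu nu : nat -> R).

Definition ok0 (i x : nat) : bool := (0 < x)%N.
Definition phi l (x : nat) : R := (sv l x)%:R / 2 ^+ l.

Lemma fwd0_zero i0 nu k : nu 0%N = 0 -> fwd ok0 i0 nu k 0%N = 0.
Proof. by case: k => [|k] //= _; rewrite /stepm. Qed.

Lemma Tf_phi i l x : (0 < x)%N -> Tf ok0 i (phi l) x = phi l.+1 x.
Proof.
move=> hx; rewrite /Tf /ok0 /phi svS // natrD exprS.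
case: x hx => [|[|x]] //= _.
  by rewrite sv_k0 /=; field; rewrite expf_neq0 // pnatr_eq0.
by field; rewrite expf_neq0 // pnatr_eq0.
Qed.

Lemma sv_adj i0 nu (S N : nat) : (forall x, (S <= x)%N -> nu x = 0) -> nu 0%N = 0 ->
  forall k l, (S + k <= N)%N ->
  \sum_(x < N.+1) fwd ok0 i0 nu k x * phi l x = \sum_(x < N.+1) nu x * phi (l + k) x.
Proof.
move=> hs h0; elim=> [|k IH] l hk; first by rewrite addn0.
rewrite /= adjoint; last by move=> x hx; apply: (fwd_supp ok0 i0 hs); lia.
rewrite -addSnnS -(IH l.+1); last lia.
apply: eq_bigr => x _.
case: (posnP x) => [->|hx]; first by rewrite fwd0_zero // !mul0r.
by rewrite Tf_phi.
Qed.

Definition deltam (m y : nat) : R := (y == m)%:R.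

Lemma surv0 i0 m (N k : nat) : (0 < m)%N -> (m.+1 + k <= N)%N ->
  \sum_(x < N.+1) fwd ok0 i0 (deltam m) k x = phi k m.
Proof.
move=> hm hk.
have hs : forall x, (m.+1 <= x)%N -> deltam m x = 0.
  by move=> x hx; rewrite /deltam; have -> : (x == m) = false by apply/negbTE; lia.
have h0 : deltam m 0 = 0 by rewrite /deltam; have -> : (0 == m)%N = false by lia.
transitivity (\sum_(x < N.+1) fwd ok0 i0 (deltam m) k x * phi 0 x).
  apply: eq_bigr => x _; case: (posnP x) => [->|hx]; first by rewrite fwd0_zero // mul0r.
  by rewrite /phi sv_0x hx expr0 divr1 mulr1.
rewrite (sv_adj _ hs h0 0%N) // add0n.
have hmN : (m < N.+1)%N by lia.
rewrite (bigD1 (Ordinal hmN)) //= big1 /deltam ?eqxx ?mul1r ?addr0 //.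
move=> i hi; have -> : (nat_of_ord i == m) = false; last by rewrite mul0r.
by apply/negbTE; apply: contra hi => /eqP h; apply/eqP; apply: val_inj.
Qed.

Lemma phi_bound k m : (phi k m) ^+ 2 * (k.+1)%:R <= 8 * (m%:R) ^+ 2.
Proof.
have h1 := sv_bound k m; have h2 := bin_sq k k./2.
have hn : (sv k m ^ 2 * k.+1 <= 8 * m ^ 2 * 4 ^ k)%N.
  apply: (leq_trans (n := (2 * m * 'C(k, k./2)) ^ 2 * k.+1)).
    by rewrite leq_mul2r leq_exp2r ?h1 ?orbT.
  have -> : ((2 * m * 'C(k, k./2)) ^ 2 * k.+1 = 4 * m ^ 2 * ('C(k, k./2) ^ 2 * k.+1))%N by ring.
  have -> : (8 * m ^ 2 * 4 ^ k = 4 * m ^ 2 * (2 * 4 ^ k))%N by ring.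
  by rewrite leq_mul2l h2 orbT.
have hR : ((sv k m)%:R ^+ 2 * (k.+1)%:R <= 8 * (m%:R) ^+ 2 * 4 ^+ k :> R).
  have := hn; rewrite -(ler_nat R) !natrM !natrX => h; exact: h.
have h4 : (4 : R) ^+ k = (2 ^+ k) ^+ 2 by rewrite -exprM mulnC exprM; congr (_ ^+ _); rewrite expr2; lra.
have hp : (0 : R) < 2 ^+ k by apply: exprn_gt0; lra.
rewrite /phi expr_div_n -mulrA (mulrC _ (k.+1)%:R) mulrA ler_pdivrMr; last by rewrite exprn_gt0.
by rewrite -h4.
Qed.

Variable N : nat.
Lemma W_step ok i nu (L : R) : (forall x, ~~ ok i.+1 x -> x%:R < L) -> 0 <= L ->
  (forall x, 0 <= nu x) -> (forall x, (N <= x)%N -> nu x = 0) ->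
  \sum_(x < N.+1) nu x * (x%:R - L) <= \sum_(x < N.+1) stepm ok i nu x * (x%:R - L).
Proof.
move=> hok hL h0 hs; rewrite (adjoint ok i (fun x : nat => x%:R - L)) //; apply: ler_sum => xo _; move: (nat_of_ord xo) => x.
apply: ler_wpM2l => //; rewrite /Tf.
have g : forall y : nat, y%:R - L <= (if ok i.+1 y then y%:R - L else 0).
  move=> y; case: ifP => o //; have := hok y; rewrite o => /(_ isT); lra.
have := g x.+1; case: x => [|x] /=.
  rewrite ?mulr0n ?mulr1n; set c := (if _ then _ else _) => h; lra.
have := g x; rewrite -[(x.+2)%:R]natr1 -[(x.+1)%:R]natr1; set c1 := (if ok i.+1 x then _ else _);
  set c2 := (if ok i.+1 _ then _ else _) => h1 h2; lra.
Qed.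

Lemma F_step ok i nu : (forall x, 0 <= nu x) -> (forall x, (N <= x)%N -> nu x = 0) ->
  \sum_(x < N.+1) stepm ok i nu x * (x%:R ^+ 2) <=
  \sum_(x < N.+1) nu x * (x%:R ^+ 2) + \sum_(x < N.+1) nu x.
Proof.
move=> h0 hs; rewrite (adjoint ok i (fun x : nat => x%:R ^+ 2)) // -big_split /=; apply: ler_sum => xo _; move: (nat_of_ord xo) => x.
have -> : nu x * x%:R ^+ 2 + nu x = nu x * (x%:R ^+ 2 + 1) by ring.
apply: ler_wpM2l => //; rewrite /Tf.
have g : forall y : nat, (if ok i.+1 y then y%:R ^+ 2 else 0) <= y%:R ^+ 2 :> R.
  by move=> y; case: ifP => // _; apply: sqr_ge0.
have := g x.+1; case: x => [|x] /=.
  rewrite ?mulr0n ?mulr1n; set c := (if _ then _ else _) => h.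
  have : 0 <= c.
    by rewrite /c; case: ifP => _ //; apply: sqr_ge0.
  lra.
have := g x; rewrite -[(x.+2)%:R]natr1 -[(x.+1)%:R]natr1; set c1 := (if ok i.+1 x then _ else _);
  set c2 := (if ok i.+1 _ then _ else _) => h1 h2.
have e : ((x%:R + 1 + 1) ^+ 2 + (x%:R) ^+ 2) / 2 = (x%:R + 1) ^+ 2 + 1 :> R by field.
lra.
Qed.
End Pot.

Section Reals.
Variable R : realType.

Lemma le_sq (a b : R) : 0 <= a -> 0 <= b -> a ^+ 2 <= b ^+ 2 -> a <= b.
Proof. move=> ha hb h; rewrite -ler_sqr ?nnegrE //. Qed.

Lemma sum_isqrt (K : nat) :
  \sum_(k < K) (Num.sqrt (k.+1%:R : R))^-1 <= 2 * Num.sqrt (K%:R).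
Proof.
elim: K => [|K IH]; first by rewrite big_ord0 sqrtr0 mulr0.
rewrite big_ord_recr /=.
set a := Num.sqrt (K%:R : R) in IH *; set b := Num.sqrt (K.+1%:R : R).
have ha : 0 <= a by apply: sqrtr_ge0.
have hb : 0 < b by rewrite sqrtr_gt0 ltr0Sn.
have ea : a ^+ 2 = K%:R by rewrite sqr_sqrtr // ler0n.
have eb : b ^+ 2 = K%:R + 1 by rewrite sqr_sqrtr ?ler0n // natr1.
suff : b^-1 <= 2 * b - 2 * a by lra.
rewrite -[b^-1]mul1r ler_pdivrMr // mulrBl.
have : 2 * a * b <= a ^+ 2 + b ^+ 2 by have := sqr_ge0 (a - b); lra.
nra.
Qed.

Lemma geom_sum (r : R) (j0 d : nat) : 0 <= r < 1 ->
  \sum_(i < d) r ^+ (j0 + i) <= r ^+ j0 / (1 - r).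
Proof.
move=> /andP[r0 r1].
have e : \sum_(i < d) r ^+ (j0 + i) * (1 - r) = r ^+ j0 - r ^+ (j0 + d).
  elim: d => [|d IH]; first by rewrite big_ord0 addn0 subrr.
  by rewrite big_ord_recr /= IH addnS exprS; ring.
rewrite ler_pdivlMr; last lra.
rewrite mulr_suml e; have : 0 <= r ^+ (j0 + d) by apply: exprn_ge0. lra.
Qed.

Lemma small_pow (r eps : R) : 0 <= r < 1 -> 0 < eps -> exists j : nat, r ^+ j <= eps.
Proof.
move=> /andP[r0 r1] he.
case: (eqVneq r 0) => [->|rn0]; first by exists 1%N; rewrite expr1 ltW.
have rp : 0 < r by rewrite lt_neqAle eq_sym rn0.
set d := r^-1 - 1.
have hd : 0 < d by rewrite /d subr_gt0 invf_gt1.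
have bern : forall j : nat, 1 + j%:R * d <= (r^-1) ^+ j.
  elim=> [|j IH]; first by rewrite mul0r addr0 expr0.
  rewrite exprS -natr1.
  have h1 : 1 <= r^-1 by rewrite invf_ge1 // ltW.
  have : 0 <= j%:R * d by apply: mulr_ge0; [rewrite ler0n | exact: ltW].
  have : (r^-1) * (1 + j%:R * d) <= (r^-1) * (r^-1 ^+ j).
    by rewrite ler_pM2l // invr_gt0.
  rewrite /d in IH *. nra.
have hpos : 0 < (eps * d)^-1 by rewrite invr_gt0 mulr_gt0.
have hB := archi_boundP (ltW hpos).
set j := Num.bound _ in hB.
exists j.
have h2 : eps^-1 < j%:R * d.
  have := hB; rewrite -(ltr_pM2r hd) invfM -mulrA mulVf ?gt_eqF // mulr1 //.
have h3 : eps^-1 <= (r^-1) ^+ j by have := bern j; lra.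
have hp : 0 < r ^+ j by apply: exprn_gt0.
rewrite -[eps]invrK -[r ^+ j]invrK lef_pV2 ?posrE ?invr_gt0 //.
by rewrite -exprVn.
Qed.
End Reals.

Section Rho.
Variable R : realType.

Lemma rho_ge1 (b : R) : 0 <= b -> 1 <= 2 `^ b.
Proof. by move=> hb; have := @ler_powR R 2 _ 0 b; rewrite powRr0; apply => //; rewrite ler1n. Qed.

Lemma rho_sq (b : R) : b < 2^-1 -> (2 `^ b) ^+ 2 < 2.
Proof.
move=> hb.
rewrite -powR_mulrn ?powR_ge0 // -powRrM.
have h2 : (2:R) = expR (ln 2) by rewrite lnK // posrE.
rewrite [X in _ < X]h2 /powR pnatr_eq0 /= ltr_expR -{2}(mul1r (ln 2)).
rewrite ltr_pM2r ?ln_gt0 ?ltr1n //.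
have : b * 2 < 2^-1 * 2 by rewrite ltr_pM2r.
by rewrite mulVf ?pnatr_eq0.
Qed.

Lemma pow_le_rho (b : R) (i j : nat) : 0 <= b -> (i <= 2 ^ j)%N ->
  (i%:R) `^ b <= (2 `^ b) ^+ j.
Proof.
move=> hb hij.
apply: (le_trans (y := ((2 ^ j)%N%:R) `^ b)).
  by apply: ge0_ler_powR; rewrite ?nnegrE ?ler0n // ler_nat.
rewrite natrX -powR_mulrn ?ler0n // -powRrM mulrC powRrM powR_mulrn //.
Qed.

Lemma pow_le_self (b : R) (i : nat) : b <= 1 -> (0 < i)%N -> (i%:R) `^ b <= i%:R.
Proof. by move=> hb hi; apply: ler1_powR => //; rewrite ler1n. Qed.
End Rho.

Section Lower.
Variables (R : realType) (beta : R).
Hypotheses (hb0 : 0 < beta) (hb1 : beta < 2^-1).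
Variables (j0 n : nat).
Hypothesis hmn : (2 ^ j0 <= n)%N.

Let m : nat := (2 ^ j0)%N.
Let K : nat := (n - m)%N.
Let N : nat := n.+1.
Let ok := okg beta.
Let mu (k : nat) : nat -> R := fwd ok m (deltam R m) k.
Let rho : R := 2 `^ beta.
Let s2 : R := Num.sqrt 2.

Lemma m_gt0 : (0 < m)%N.
Proof. by rewrite expn_gt0. Qed.

Lemma ok_ok0 i x : ok i.+1 x -> ok0 i.+1 x.
Proof.
rewrite /ok /okg /ok0 => h; rewrite lt0n; apply/negP => /eqP e; move: h; rewrite e.
by rewrite real_leNgt ?realE ?powR_ge0 ?lexx // powR_gt0 // ltr0Sn.
Qed.

Lemma deltam_ge0 x : 0 <= deltam R m x.
Proof. by rewrite /deltam ler0n. Qed.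

Lemma mu_ge0 k x : 0 <= mu k x.
Proof. exact: fwd_ge0 deltam_ge0 k x. Qed.

Lemma mu_supp k x : (k <= K)%N -> (N <= x)%N -> mu k x = 0.
Proof.
move=> hk hx; apply: (fwd_supp ok m (S := m.+1)).
  by move=> y hy; rewrite /deltam; have -> : (y == m) = false by apply/negbTE; lia.
rewrite /N /K in hx hk *; have := m_gt0; lia.
Qed.

Let A k := \sum_(x < N.+1) mu k x.
Let E k := \sum_(x < N.+1) mu k x * x%:R.
Let F k := \sum_(x < N.+1) mu k x * x%:R ^+ 2.
Let W (L : R) k := \sum_(x < N.+1) mu k x * (x%:R - L).

Lemma A_ge0 k : 0 <= A k.
Proof. by apply: sumr_ge0 => x _; apply: mu_ge0. Qed.

Lemma A_le_phi k : (k <= K)%N -> A k <= phi R k m.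
Proof.
move=> hk; rewrite -(surv0 R m m_gt0 (N := N)); last by rewrite /N /K in hk *; lia.
apply: ler_sum => x _.
by have [] := fwd_mono m ok_ok0 deltam_ge0 (fun y => lexx _) k x.
Qed.

Lemma s2_gt0 : 0 < s2. Proof. by rewrite sqrtr_gt0 ltr0n. Qed.
Lemma s2_sq : s2 ^+ 2 = 2. Proof. by rewrite sqr_sqrtr // ler0n. Qed.

Lemma A_bound k : (k <= K)%N -> A k * Num.sqrt (k.+1)%:R <= 2 * s2 * m%:R.
Proof.
move=> hk; apply: le_sq.
- by apply: mulr_ge0; [apply: A_ge0 | apply: sqrtr_ge0].
- by apply: mulr_ge0; [apply: mulr_ge0; [lra | apply: ltW; apply: s2_gt0] | apply: ler0n].
rewrite !exprMn s2_sq sqr_sqrtr ?ler0n //.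
have h1 := phi_bound R k m.
have h2 : A k ^+ 2 <= phi R k m ^+ 2.
  rewrite ler_sqr ?nnegrE ?A_ge0 //; first exact: A_le_phi.
  exact: le_trans (A_ge0 k) (A_le_phi hk).
have h3 : A k ^+ 2 * (k.+1)%:R <= phi R k m ^+ 2 * (k.+1)%:R.
  by rewrite ler_pM2r ?ltr0Sn.
have -> : (2:R) ^+ 2 * 2 = 8 by rewrite expr2; lra.
exact: le_trans h3 h1.
Qed.

Lemma sum_deltam (f : nat -> R) : \sum_(x < N.+1) deltam R m x * f x = f m.
Proof.
have hmN : (m < N.+1)%N by rewrite /N /m; lia.
rewrite (bigD1 (Ordinal hmN)) //= big1 /deltam ?eqxx ?mul1r ?addr0 //.
move=> i hi; have -> : (nat_of_ord i == m) = false; last by rewrite mul0r.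
by apply/negbTE; apply: contra hi => /eqP h; apply/eqP; apply: val_inj.
Qed.

Lemma W_split L k : W L k = E k - L * A k.
Proof. rewrite /W /E /A mulr_sumr -sumrB; apply: eq_bigr => x _; ring. Qed.

Lemma W_mono L k : (k < K)%N -> 0 <= L -> ((m + k).+1%:R `^ beta <= L) -> W L k <= W L k.+1.
Proof.
move=> hk hL hp; rewrite /W /mu /=.
apply: W_step => //.
- move=> x; rewrite /ok /okg -ltNge => h; exact: lt_le_trans h hp.
- by move=> x; apply: mu_ge0.
- by move=> x hx; apply: mu_supp => //; exact: ltnW.
Qed.

Lemma W_block L k1 k2 : (k1 <= k2)%N -> (k2 <= K)%N -> 0 <= L ->
  (forall k, (k1 <= k)%N -> (k < k2)%N -> (m + k).+1%:R `^ beta <= L) -> W L k1 <= W L k2.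
Proof.
move=> h12 h2K hL hp; elim: k2 h12 h2K hp => [|k2 IH] h12 h2K hp.
  by have -> : k1 = 0%N by lia.
case: (leqP k1 k2) => h.
- apply: le_trans (IH h _ _) (W_mono _ hL _); first lia.
  + by move=> k ha hb; apply: hp => //; lia.
  + lia.
  + by apply: hp => //.
- by have -> : k1 = k2.+1 by lia.
Qed.

Lemma F_bound k : (k <= K)%N -> F k <= m%:R ^+ 2 + \sum_(i < k) A i.
Proof.
elim: k => [|k IH] hk.
  by rewrite /F /mu /= big_ord0 addr0 (sum_deltam (fun x => x%:R ^+ 2)).
rewrite big_ord_recr /= addrA.
apply: le_trans (_ : F k + A k <= _); last by rewrite lerD2r IH //; lia.
rewrite /F /A /mu /=; apply: F_step.
- by move=> x; apply: mu_ge0.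
- by move=> x hx; apply: mu_supp => //; lia.
Qed.

Lemma E_ge_W L k : 0 <= L -> W L k <= E k.
Proof.
move=> hL; rewrite W_split; have := A_ge0 k; have : 0 <= L * A k by apply: mulr_ge0 => //; apply: A_ge0.
lra.
Qed.

Lemma AMGM t k : 0 < t -> E k <= F k / (2 * t) + t / 2 * A k.
Proof.
move=> ht; rewrite /E /F /A mulr_suml mulr_sumr -big_split /=.
apply: ler_sum => x _.
have h0 := mu_ge0 k x.
have : (x%:R : R) <= x%:R ^+ 2 / (2 * t) + t / 2.
  have e : (x%:R : R) ^+ 2 / (2 * t) + t / 2 - x%:R = ((x%:R : R) - t) ^+ 2 / (2 * t).
    by field; exact: lt0r_neq0.
  have : 0 <= ((x%:R : R) - t) ^+ 2 / (2 * t).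
    apply: divr_ge0; first exact: sqr_ge0.
    apply: mulr_ge0; [lra | exact: ltW].
  lra.
move=> h; have := ler_wpM2l h0 h; nra.
Qed.

Let err (d : nat) : R := \sum_(i < d) rho ^+ (j0 + i + 2) * A (2 ^ (j0 + i + 1) - m)%N.

Lemma rho_ge0 : 0 <= rho. Proof. exact: powR_ge0. Qed.

Lemma block d : forall k, (k <= K)%N -> (2 ^ (j0 + d) <= m + k)%N -> (m + k <= 2 ^ (j0 + d + 1))%N ->
  m%:R - rho ^+ (j0 + 1) - err d <= W (rho ^+ (j0 + d + 1)) k.
Proof.
elim: d => [|d IH] k hk h1 h2.
  rewrite addn0 /err big_ord0 subr0.
  have -> : m%:R - rho ^+ (j0 + 1) = W (rho ^+ (j0 + 1)) 0.
    by rewrite /W /mu /= (sum_deltam (fun x => x%:R - rho ^+ (j0 + 1))).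
  apply: W_block => //; first by apply: exprn_ge0; apply: rho_ge0.
  move=> k' _ hk'; apply: pow_le_rho; first exact: ltW.
  rewrite addn0 in h2; lia.
have hm : (m <= 2 ^ (j0 + d))%N by rewrite /m leq_exp2l //; lia.
have e2 : (2 ^ (j0 + d.+1) = 2 * 2 ^ (j0 + d))%N by rewrite addnS expnS.
have e3 : (2 ^ (j0 + d.+1 + 1) = 2 * 2 ^ (j0 + d.+1))%N by rewrite addn1 expnS.
set k1 := (2 ^ (j0 + d + 1) - m)%N.
have hk1 : (m + k1 = 2 ^ (j0 + d.+1))%N by rewrite /k1 addn1 -addnS; lia.
have hk1k : (k1 <= k)%N by lia.
have hW : W (rho ^+ (j0 + d.+1 + 1)) k1 <= W (rho ^+ (j0 + d.+1 + 1)) k.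
  apply: (W_block hk1k hk); first by apply: exprn_ge0; apply: rho_ge0.
  move=> k' _ hk'; apply: pow_le_rho; first exact: ltW. lia.
apply: le_trans hW.
have IH1 := IH k1 (leq_trans hk1k hk) ltac:(lia) ltac:(rewrite addn1 -addnS; lia).
rewrite !W_split in IH1 *.
have hA := A_ge0 k1.
have hr := rho_ge0.
have hr1 : 0 <= rho ^+ (j0 + d + 1) by apply: exprn_ge0.
have -> : err d.+1 = err d + rho ^+ (j0 + d + 2) * A k1.
  by rewrite /err big_ord_recr.
have -> : (j0 + d.+1 + 1 = j0 + d + 2)%N by lia.
have : 0 <= rho ^+ (j0 + d + 1) * A k1 by apply: mulr_ge0.
lra.
Qed.

Let r : R := rho / s2.

Lemma r_ge0 : 0 <= r. Proof. by apply: divr_ge0; [apply: rho_ge0 | apply: ltW; apply: s2_gt0]. Qed.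

Lemma rho_eq e : rho ^+ e = r ^+ e * s2 ^+ e.
Proof. by rewrite /r -exprMn divfK // lt0r_neq0 // s2_gt0. Qed.

Lemma term_bound i : (2 ^ (j0 + i + 1) <= n)%N ->
  rho ^+ (j0 + i + 2) * A (2 ^ (j0 + i + 1) - m)%N <= 2 * s2 * rho ^+ 2 * m%:R * r ^+ (j0 + i).
Proof.
move=> hi; set e := (j0 + i)%N; set k := (2 ^ (j0 + i + 1) - m)%N.
have hm : (m <= 2 ^ e)%N by rewrite /m /e leq_exp2l //; lia.
have ee : (2 ^ (j0 + i + 1) = 2 * 2 ^ e)%N by rewrite addn1 expnS.
have hkK : (k <= K)%N by rewrite /k /K; lia.
have hke : (2 ^ e <= k.+1)%N by rewrite /k; lia.
have hs : s2 ^+ e <= Num.sqrt (k.+1)%:R.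
  apply: le_sq; [apply: exprn_ge0; apply: ltW; apply: s2_gt0 | apply: sqrtr_ge0 |].
  rewrite -exprM mulnC exprM s2_sq sqr_sqrtr ?ler0n // -natrX ler_nat //.
have hA := A_bound hkK.
have hA0 := A_ge0 k.
have h1 : A k * s2 ^+ e <= 2 * s2 * m%:R.
  apply: le_trans hA; exact: ler_wpM2l.
rewrite exprD rho_eq.
have hr : 0 <= r ^+ e by apply: exprn_ge0; apply: r_ge0.
have hrho2 : 0 <= rho ^+ 2 by apply: exprn_ge0; apply: rho_ge0.
have -> : r ^+ e * s2 ^+ e * rho ^+ 2 * A k = r ^+ e * rho ^+ 2 * (A k * s2 ^+ e) by ring.
have -> : 2 * s2 * rho ^+ 2 * m%:R * r ^+ e = r ^+ e * rho ^+ 2 * (2 * s2 * m%:R) by ring.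
apply: ler_wpM2l => //; exact: mulr_ge0.
Qed.

Lemma err_bound d : r < 1 -> (2 ^ (j0 + d) <= n)%N ->
  err d <= 2 * s2 * rho ^+ 2 * m%:R * (r ^+ j0 / (1 - r)).
Proof.
move=> hr1 hd.
apply: (le_trans (y := \sum_(i < d) 2 * s2 * rho ^+ 2 * m%:R * r ^+ (j0 + i))).
  apply: ler_sum => i _; apply: term_bound.
  apply: leq_trans hd; rewrite leq_exp2l //; have := ltn_ord i; lia.
rewrite -mulr_sumr; apply: ler_wpM2l.
  apply: mulr_ge0; last exact: ler0n.
  apply: mulr_ge0; last by apply: exprn_ge0; apply: rho_ge0.
  apply: mulr_ge0; [lra | apply: ltW; apply: s2_gt0].
by apply: geom_sum; rewrite r_ge0 hr1.
Qed.

Lemma s2_le2 : s2 <= 2.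
Proof. apply: le_sq; [apply: ltW; apply: s2_gt0 | lra |]; rewrite s2_sq; lra. Qed.

Lemma s2_ge1 : 1 <= s2.
Proof. apply: le_sq; [lra | apply: ltW; apply: s2_gt0 |]; rewrite s2_sq; lra. Qed.

Lemma lower_K : r < 1 -> rho * r ^+ j0 <= 4^-1 ->
  2 * s2 * rho ^+ 2 * (r ^+ j0 / (1 - r)) <= 4^-1 ->
  m%:R / 4 <= A K * (m%:R + 4 * s2 * Num.sqrt K%:R).
Proof.
move=> hr1 he1 he2.
have hn0 : (0 < n)%N by have := m_gt0; have := hmn; rewrite /m; lia.
set J := trunc_log 2 n.
have hJ1 : (2 ^ J <= n)%N by apply: trunc_logP.
have hJ2 : (n < 2 ^ J.+1)%N by apply: trunc_log_ltn.
have hJ0 : (j0 <= J)%N by apply: trunc_log_max.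
have hb := @block (J - j0)%N K (leqnn K).
have ej : (j0 + (J - j0) = J)%N by lia.
rewrite ej in hb.
have hmK : (m + K = n)%N by rewrite /K /m; lia.
rewrite hmK addn1 in hb.
have hb' := hb hJ1 (ltnW hJ2).
have hEW := @E_ge_W (rho ^+ J.+1) K (exprn_ge0 _ rho_ge0).
have herr := err_bound hr1 (ltac:(by rewrite ej) : (2 ^ (j0 + (J - j0)) <= n)%N).
have hm : m%:R = 2 ^+ j0 :> R by rewrite /m natrX.
have hmpos : 0 < m%:R :> R by rewrite ltr0n m_gt0.
have hrho1 : rho ^+ (j0 + 1) <= m%:R / 4.
  rewrite addn1 exprS rho_eq.
  have hs : s2 ^+ j0 <= m%:R.
    rewrite hm; apply: lerXn2r; rewrite ?nnegrE; [apply: ltW; apply: s2_gt0 | lra | exact: s2_le2].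
  have hr0 : 0 <= r ^+ j0 by apply: exprn_ge0; apply: r_ge0.
  have hs0 : 0 <= s2 ^+ j0 by apply: exprn_ge0; apply: ltW; apply: s2_gt0.
  have : rho * (r ^+ j0 * s2 ^+ j0) <= rho * r ^+ j0 * m%:R.
    rewrite mulrA; apply: ler_wpM2l => //; apply: mulr_ge0 => //; exact: rho_ge0.
  have : rho * r ^+ j0 * m%:R <= 4^-1 * m%:R by apply: ler_wpM2r => //; exact: ltW.
  lra.
have herr' : err (J - j0) <= m%:R / 4.
  apply: le_trans herr _.
  have -> : 2 * s2 * rho ^+ 2 * m%:R * (r ^+ j0 / (1 - r)) =
     (2 * s2 * rho ^+ 2 * (r ^+ j0 / (1 - r))) * m%:R by ring.
  have := ler_wpM2r (ltW hmpos) he2; lra.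
have hE : m%:R / 2 <= E K by lra.
have hFK := F_bound (leqnn K).
have hsum : \sum_(i < K) A i <= 2 * s2 * m%:R * (2 * Num.sqrt K%:R).
  apply: (le_trans (y := \sum_(i < K) 2 * s2 * m%:R * (Num.sqrt (i.+1)%:R)^-1)).
    apply: ler_sum => i _.
    have hiK : (i <= K)%N by have := ltn_ord i; lia.
    have hsq : 0 < Num.sqrt (i.+1%:R : R) by rewrite sqrtr_gt0 ltr0Sn.
    rewrite ler_pdivlMr //; exact: A_bound.
  rewrite -mulr_sumr; apply: ler_wpM2l; last exact: sum_isqrt.
  apply: mulr_ge0; last exact: ler0n.
  apply: mulr_ge0; [lra | apply: ltW; apply: s2_gt0].
set q := Num.sqrt (K%:R : R).
have hq : 0 <= q by apply: sqrtr_ge0.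
have hs2 := s2_gt0.
set t := 2 * (m%:R + 4 * s2 * q).
have ht : 0 < t.
  rewrite /t; apply: mulr_gt0; first lra.
  have : 0 <= 4 * s2 * q by apply: mulr_ge0 => //; apply: mulr_ge0; lra.
  lra.
have hAM := AMGM K ht.
have hF : F K / (2 * t) <= m%:R / 4.
  rewrite ler_pdivrMr; last lra.
  have -> : m%:R / 4 * (2 * t) = m%:R * (m%:R + 4 * s2 * q) by rewrite /t; field.
  have : m%:R ^+ 2 + \sum_(i < K) A i <= m%:R * (m%:R + 4 * s2 * q).
    have -> : m%:R * (m%:R + 4 * s2 * q) = m%:R ^+ 2 + 2 * s2 * m%:R * (2 * q) by ring.
    by rewrite lerD2l.
  lra.
have -> : A K * (m%:R + 4 * s2 * q) = t / 2 * A K by rewrite /t; field.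
lra.
Qed.

End Lower.

Section Final.
Variable R : realType.

Lemma fwd_ext ok i0 (mu mu' : nat -> R) : (forall x, mu x = mu' x) ->
  forall k x, fwd ok i0 mu k x = fwd ok i0 mu' k x.
Proof.
move=> h; elim=> [|k IH] x //=; rewrite /stepm; case: ifP => // _.
by case: x => [|y]; rewrite !IH.
Qed.

Lemma diag (b : R) : b <= 1 -> forall k, (2 ^+ k)^-1 <= fwd (okg b) 0 (delta0 R) k k.
Proof.
move=> hb; elim=> [|k IH] /=; first by rewrite expr0 invr1 /delta0 eqxx.
rewrite /stepm add0n.
have -> : okg b k.+1 k.+1 by rewrite /okg; apply: pow_le_self.
have h0 : 0 <= fwd (okg b) 0 (delta0 R) k k.+2.
  by apply: fwd_ge0 => x; rewrite /delta0 ler0n.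
rewrite exprS invfM.
have : (2:R)^-1 * (2 ^+ k)^-1 <= 2^-1 * fwd (okg b) 0 (delta0 R) k k.
  by rewrite ler_pM2l // invr_gt0; lra.
lra.
Qed.

Lemma term_le_sum (f : nat -> R) (N i : nat) : (forall x, 0 <= f x) -> (i < N.+1)%N ->
  f i <= \sum_(x < N.+1) f x.
Proof.
move=> h0 hi; rewrite (bigD1 (Ordinal hi)) //=.
have : 0 <= \sum_(j < N.+1 | j != Ordinal hi) f j by apply: sumr_ge0 => j _; exact: h0.
lra.
Qed.

Lemma sum_ext1 (f : nat -> R) (N : nat) : (forall x, 0 <= f x) ->
  \sum_(x < N.+1) f x <= \sum_(x < N.+2) f x.
Proof. by move=> h; rewrite [X in _ <= X]big_ord_recr /=; have := h N.+1; lra. Qed.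

Lemma okg_ok0 (a : R) i x : okg a i.+1 x -> ok0 i.+1 x.
Proof.
rewrite /okg /ok0 => h; rewrite lt0n; apply/negP => /eqP e; move: h; rewrite e.
by rewrite real_leNgt ?realE ?powR_ge0 ?lexx // powR_gt0 // ltr0Sn.
Qed.

Lemma prob_fwd (a : R) n : prob_good a n = \sum_(x < n.+1) fwd (okg a) 0 (delta0 R) n x.
Proof.
rewrite prob_cnt; under eq_bigr => x _ do rewrite cnt_fwd.
rewrite -mulr_sumr mulrC mulKf // expf_neq0 // pnatr_eq0 //.
Qed.

Lemma upper (a : R) n : (0 < n)%N -> (prob_good a n) ^+ 2 * n%:R <= 2.
Proof.
move=> hn; rewrite prob_fwd.
set P := \sum_(x < n.+1) _.
have hP0 : 0 <= P by apply: sumr_ge0 => x _; apply: fwd_ge0 => y; rewrite /delta0 ler0n.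
have hd0 : forall y, 0 <= delta0 R y by move=> y; rewrite /delta0 ler0n.
have h1 : P <= \sum_(x < n.+1) fwd ok0 0 (delta0 R) n x.
  apply: ler_sum => x _.
  by have [] := fwd_mono 0 (@okg_ok0 a) hd0 (fun y => lexx _) n x.
case: n hn P hP0 h1 => [//|n'] _ P hP0 h1.
have e1 : forall x, fwd ok0 0 (delta0 R) n'.+1 x =
    2^-1 * fwd ok0 1 (deltam R 1) n' x.
  move=> x; rewrite -(add1n n') fwd_add add0n -fwd_scale; apply: fwd_ext => y /=.
  rewrite /stepm /ok0 /delta0 /deltam.
  case: y => [|[|y]] /=; rewrite ?mulr0 ?mulr1 ?addr0 ?add0r //; try lra.
have hd1 : forall y, 0 <= deltam R 1 y by move=> y; rewrite /deltam ler0n.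
have h2 : \sum_(x < n'.+2) fwd ok0 0 (delta0 R) n'.+1 x <= 2^-1 * phi R n' 1.
  under eq_bigr => x _ do rewrite e1.
  rewrite -mulr_sumr ler_pM2l; last lra.
  rewrite -(surv0 R 1 (isT : (0 < 1)%N) (N := n'.+2)) //.
  apply: sum_ext1 => y; apply: fwd_ge0 => z; exact: hd1.
have hphi := phi_bound R n' 1.
have hph0 : 0 <= phi R n' 1 by rewrite /phi; apply: divr_ge0; [rewrite ler0n | apply: exprn_ge0; lra].
have hP : P <= 2^-1 * phi R n' 1 by lra.
have : P ^+ 2 <= (2^-1 * phi R n' 1) ^+ 2.
  rewrite ler_sqr ?nnegrE //; lra.
rewrite exprMn => h3.
have hn1 : (0:R) <= (n'.+1)%:R by rewrite ler0n.
have := ler_wpM2r hn1 h3.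
have : (2:R)^-1 ^+ 2 = 4^-1 by rewrite expr2 -invfM; congr (_^-1); lra.
move=> ->; rewrite expr1n mulr1 in hphi; nra.
Qed.
End Final.

Lemma transfer (R : realType) (b : R) (m n : nat) : b <= 1 -> (m <= n)%N ->
  (2 ^+ m)^-1 * \sum_(x < n.+2) fwd (okg b) m (deltam R m) (n - m) x <=
  \sum_(x < n.+1) fwd (okg b) 0 (delta0 R) n x.
Proof.
move=> hb hmn.
have hd : forall y, 0 <= deltam R m y by move=> y; rewrite /deltam ler0n.
rewrite big_ord_recr /= (fwd_supp (okg b) m (S := m.+1)); first last.
- lia.
- by move=> y hy; rewrite /deltam; have -> : (y == m) = false by apply/negbTE; lia.
rewrite addr0 mulr_sumr.
have -> : n = (m + (n - m))%N by lia.
rewrite addKn; apply: ler_sum => x _.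
rewrite fwd_add add0n -fwd_scale.
have h0 : forall y, 0 <= (2 ^+ m)^-1 * deltam R m y.
  by move=> y; apply: mulr_ge0 => //; rewrite invr_ge0 exprn_ge0.
have h1 : forall y, (2 ^+ m)^-1 * deltam R m y <= fwd (okg b) 0 (delta0 R) m y.
  move=> y; rewrite /deltam; case: eqP => [->|_].
    by rewrite mulr1; apply: diag.
  by rewrite mulr0; apply: fwd_ge0 => z; rewrite /delta0 ler0n.
by have [] := fwd_mono m (fun i x (h : okg b i.+1 x) => h) h0 h1 (n - m) x.
Qed.

Unset Implicit Arguments.

Theorem lemma13 (R : realType) (alpha : R) (halpha : alpha < 2^-1) :
  exists c C : R, 0 < c /\ c <= C /\
    forall n : nat, (1 <= n)%N ->
      c * n%:R `^ (- 2^-1) <= prob_good alpha n /\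
      prob_good alpha n <= C * n%:R `^ (- 2^-1).
Proof.
pose beta : R := Order.max alpha 4^-1.
have hb0 : 0 < beta by rewrite lt_max; apply/orP; right; rewrite invr_gt0; lra.
have hb1 : beta < 2^-1 by rewrite gt_max halpha /=; lra.
have hab : alpha <= beta by rewrite le_max lexx.
have hb1' : beta <= 1 by lra.
pose rho : R := 2 `^ beta.
pose s2 : R := Num.sqrt 2.
pose r : R := rho / s2.
have hrho1 : 1 <= rho := rho_ge1 (ltW hb0).
have hrho2 : rho ^+ 2 < 2 := rho_sq hb1.
have hs2 : 0 < s2 by rewrite sqrtr_gt0 ltr0n.
have hs2sq : s2 ^+ 2 = 2 by rewrite sqr_sqrtr // ler0n.
have hr0 : 0 <= r by apply: divr_ge0; lra.
have hr1 : r < 1.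
  rewrite /r ltr_pdivrMr // mul1r.
  case: (ltP rho s2) => // h.
  have : s2 ^+ 2 <= rho ^+ 2 by apply: lerXn2r; rewrite ?nnegrE; lra.
  lra.
pose eps : R := Order.min (4^-1 / rho) ((1 - r) / (8 * s2 * rho ^+ 2)).
have hrho2p : 0 < rho ^+ 2 by apply: exprn_gt0; lra.
have hden : 0 < 8 * s2 * rho ^+ 2 by apply: mulr_gt0 => //; apply: mulr_gt0 => //; lra.
have heps : 0 < eps.
  rewrite lt_min; apply/andP; split; apply: divr_gt0; lra.
have [j0 hj0] := small_pow (r := r) (eps := eps) (ltac:(by rewrite hr0 hr1)) heps.
have hrj : 0 <= r ^+ j0 by apply: exprn_ge0.
have he1 : rho * r ^+ j0 <= 4^-1.
  have : r ^+ j0 <= 4^-1 / rho by apply: le_trans hj0 _; rewrite ge_min lexx.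
  rewrite ler_pdivlMr; last lra.
  by rewrite mulrC.
have he2 : 2 * s2 * rho ^+ 2 * (r ^+ j0 / (1 - r)) <= 4^-1.
  have : r ^+ j0 <= (1 - r) / (8 * s2 * rho ^+ 2).
    by apply: le_trans hj0 _; rewrite ge_min lexx orbT.
  rewrite ler_pdivlMr // => h.
  have e : 2 * s2 * rho ^+ 2 * (r ^+ j0 / (1 - r)) =
      (r ^+ j0 * (8 * s2 * rho ^+ 2)) / (4 * (1 - r)).
    by field; lra.
  rewrite e ler_pdivrMr; last lra.
  lra.
pose m : nat := (2 ^ j0)%N.
have hm0 : (0 < m)%N by rewrite expn_gt0.
have hmR : 0 < m%:R :> R by rewrite ltr0n.
have h2m : 0 < (2 ^+ m : R) by apply: exprn_gt0; lra.
pose c : R := (2 ^+ m)^-1 * (m%:R / (4 * (m%:R + 4 * s2))).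
have hfrac : 0 < m%:R / (4 * (m%:R + 4 * s2)) :> R by apply: divr_gt0 => //; lra.
have hfrac1 : m%:R / (4 * (m%:R + 4 * s2)) <= 1 :> R by rewrite ler_pdivrMr; lra.
have hc : 0 < c by apply: mulr_gt0 => //; rewrite invr_gt0.
have hc2 : c <= (2 ^+ m)^-1.
  rewrite /c -[X in _ <= X]mulr1; apply: ler_wpM2l => //; rewrite invr_ge0; lra.
exists c, (Order.max c s2); split => //; split; first by rewrite le_max lexx.
move=> n hn.
rewrite powRN powR12_sqrt ?ler0n //.
pose q := Num.sqrt (n%:R : R).
have hq1 : 1 <= q by rewrite -sqrtr1 ler_sqrt ?ler0n // ler1n.
have hqinv : 0 < q^-1 by rewrite invr_gt0; lra.
have hqinv1 : q^-1 <= 1 by rewrite invf_le1; lra.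
have hP := prob_fwd alpha n.
have hPb : \sum_(x < n.+1) fwd (okg beta) 0 (delta0 R) n x <= prob_good alpha n.
  rewrite hP; apply: ler_sum => x _.
  have hd0 : forall y, 0 <= delta0 R y by move=> y; rewrite /delta0 ler0n.
  have hok : forall i x, okg beta i.+1 x -> okg alpha i.+1 x.
    move=> i y; rewrite /okg => h; apply: le_trans h.
    by apply: ler_powR => //; rewrite ler1n.
  by have [] := fwd_mono 0 hok hd0 (fun y => lexx _) n x.
split.
- case: (ltnP n m) => hnm.
  + have h1 : (2 ^+ n)^-1 <= \sum_(x < n.+1) fwd (okg beta) 0 (delta0 R) n x.
      apply: le_trans (diag hb1' n) _; apply: term_le_sum => // y.
      by apply: fwd_ge0 => z; rewrite /delta0 ler0n.
    have h2 : (2 ^+ m)^-1 <= (2 ^+ n)^-1 :> R.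
      rewrite lef_pV2 ?posrE ?exprn_gt0 //; try lra.
      by apply: ler_weXn2l; [lra | exact: ltnW].
    have : c * q^-1 <= c by rewrite -[X in _ <= X]mulr1; apply: ler_wpM2l; lra.
    lra.
  + have hL := lower_K hb0 hb1 hnm hr1 he1 he2.
    have hT := transfer hb1' hnm.
    set A := \sum_(x < n.+2) _ in hL hT.
    have hA0 : 0 <= A by apply: sumr_ge0 => x _; apply: fwd_ge0 => y; rewrite /deltam ler0n.
    have hK : Num.sqrt ((n - m)%N%:R : R) <= q by rewrite ler_sqrt ?ler0n // ler_nat leq_subr.
    have hK0 : 0 <= Num.sqrt ((n - m)%N%:R : R) by apply: sqrtr_ge0.
    have hbig : m%:R + 4 * s2 * Num.sqrt ((n - m)%N%:R) <= (m%:R + 4 * s2) * q.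
      have : 4 * s2 * Num.sqrt ((n - m)%N%:R) <= 4 * s2 * q.
        by apply: ler_wpM2l => //; lra.
      have : m%:R <= m%:R * q by rewrite -[X in X <= _]mulr1; apply: ler_wpM2l; lra.
      have : 4 * s2 <= 4 * s2 * q by rewrite -[X in X <= _]mulr1; apply: ler_wpM2l; lra.
      lra.
    have hA : m%:R / 4 <= A * ((m%:R + 4 * s2) * q).
      apply: le_trans hL _; apply: ler_wpM2l => //.
    have hA' : m%:R / (4 * (m%:R + 4 * s2)) * q^-1 <= A.
      have hpos : 0 < (m%:R + 4 * s2) * q by apply: mulr_gt0; lra.
      have -> : m%:R / (4 * (m%:R + 4 * s2)) * q^-1 = (m%:R / 4) / ((m%:R + 4 * s2) * q).
        by field; apply/andP; split; lra.
      by rewrite ler_pdivrMr.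
    have : c * q^-1 <= (2 ^+ m)^-1 * A.
      rewrite /c -mulrA; apply: ler_wpM2l => //; rewrite invr_ge0; lra.
    lra.
- have hu := upper alpha hn.
  have hP0 : 0 <= prob_good alpha n.
    by rewrite hP; apply: sumr_ge0 => x _; apply: fwd_ge0 => y; rewrite /delta0 ler0n.
  have hq0 : 0 < q by lra.
  have hPq : prob_good alpha n * q <= s2.
    apply: le_sq; [exact: (mulr_ge0 hP0 (ltW hq0)) | exact: ltW |].
    by rewrite exprMn sqr_sqrtr ?ler0n // hs2sq.
  have : prob_good alpha n <= s2 * q^-1 by rewrite ler_pdivlMr.
  have : s2 * q^-1 <= Order.max c s2 * q^-1.
    by apply: ler_wpM2r; [lra | rewrite le_max lexx orbT].
  lra.
Qed.
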